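(* Let $\mathcal{C}$ be a class of finite graphs. (a) $\mathcal{C}$ is $\mathrm{MSO}_2$-orderable if, and only if, $\mathrm{IS}(\mathcal{C})$ is $\mathrm{MSO}_1$-orderable. (b) $\mathcal{C}$ has property $\mathsf{SEP}$ if, and only if, $\mathrm{IS}(\mathcal{C})$ has property $\mathsf{CUT}$.
   Context: For a graph $G=\langle V,E\rangle$ its incidence split graph $\mathrm{IS}(G)$ has vertex set $V\cup E$ and edges: $\{v,e\}$ whenever $v\in V$ is an end-vertex of $e\in E$, together with $\{x,y\}$ for all distinct $x,y\in V$; $\mathrm{IS}(\mathcal{C})=\{\mathrm{IS}(G):G\in\mathcal{C}\}$. $\lfloor G\rfloor$ is the structure (universe $V$, edge relation) and $\lceil G\rceil$ the structure (universe $V\cup E$, incidence relation $\subseteq V\times E$). An MSO-formula $\varphi(x,y;Z_0,\dots,Z_{n-1})$ defines an order on a class of structures if for every nonempty member $\mathfrak{A}$ there are $P_i\subseteq A$ with $\{(a,b):\mathfrak{A}\models\varphi(a,b;\bar P)\}$ a linear order on $A$; a graph class is $\mathrm{MSO}_1$-orderable (resp. $\mathrm{MSO}_2$-orderable) if some formula defines an order on $\{\lfloor G\rfloor\}$ (resp. $\{\lceil G\rceil\}$). $\mathrm{Sep}(G,k)$ is the maximum over vertex sets $S$, $|S|\le k$, of the number of connected components of $G-S$; $\mathsf{SEP}$ means there is $f$ with $\mathrm{Sep}(G,k)\le f(k)$ for all members and all $k$. A graph with ports in $[k]$ is a graph with $\pi:V\to[k]$; for $R\subseteq[k]\times[k]$,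 $G\otimes_R H$ is the disjoint union plus all edges $\{x,y\}$ with $x,y$ in different operands, labels $a,b$ with $(a,b)\in R$; $\mathrm{Del}$ deletes labels; $\mathrm{Cut}(G,k)$ is the maximal $m$ with $G\cong\mathrm{Del}(H_0\otimes_R\cdots\otimes_R H_{m-1})$ for nonempty $H_i$ with ports in $[k]$ and some $R$; $\mathsf{CUT}$ means there is $f$ with $\mathrm{Cut}(G,k)\le f(k)$ for all members and all $k$. *)

(* Defs.v *)
From mathcomp Require Import all_boot.
Unset Printing Implicit Defensive.

Record graph := Graph {
  gV : finType;
  gadj : rel gV;
  gadj_sym : symmetric gadj;
  gadj_irr : irreflexive gadj }.
Arguments gadj {g} _ _.

Definition is_edge (G : graph) : pred {set gV G} :=
  fun e => [exists x, exists y, gadj x y && (e == [set x; y])].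
Definition edge_of (G : graph) := {e : {set gV G} | is_edge G e}.

Definition incidence (G : graph) : rel (gV G + edge_of G)%type :=
  fun a b => match a, b with
             | inl v, inr e => v \in val e
             | _, _ => false
             end.

Definition IS_adj (G : graph) : rel (gV G + edge_of G)%type :=
  fun a b => match a, b with
             | inl x, inl y => x != y
             | inl v, inr e => v \in val e
             | inr e, inl v => v \in val e
             | inr _, inr _ => false
             end.

Lemma IS_adj_sym G : symmetric (IS_adj G).
Proof. by move=> [x|e] [y|f] //=; rewrite eq_sym. Qed.

Lemma IS_adj_irr G : irreflexive (IS_adj G).
Proof. by move=> [x|e] //=; rewrite eqxx. Qed.

Definition IS (G : graph) : graph :=
  @Graph (gV G + edge_of G)%type (IS_adj G) (IS_adj_sym G) (IS_adj_irr G).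

Definition IS_class (C : graph -> Prop) : graph -> Prop :=
  fun H => exists G, C G /\ H = IS G.

Inductive mso : Type :=
| MRel of nat & nat
| MEq  of nat & nat
| MIn  of nat & nat
| MNot of mso
| MOr  of mso & mso
| MEx1 of nat & mso
| MEx2 of nat & mso.

Fixpoint sat {A : finType} (R : rel A) (v : nat -> A) (V : nat -> {set A})
    (f : mso) : Prop :=
  match f with
  | MRel i j => R (v i) (v j)
  | MEq i j => v i = v j
  | MIn i j => v i \in V j
  | MNot g => ~ sat R v V g
  | MOr g h => sat R v V g \/ sat R v V h
  | MEx1 i g => exists a : A, sat R (fun l => if l == i then a else v l) V g
  | MEx2 j g => exists X : {set A}, sat R v (fun l => if l == j then X else V l) g
  end.

Fixpoint mso_wf (fo so : nat -> bool) (f : mso) : bool :=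
  match f with
  | MRel i j => fo i && fo j
  | MEq i j => fo i && fo j
  | MIn i j => fo i && so j
  | MNot g => mso_wf fo so g
  | MOr g h => mso_wf fo so g && mso_wf fo so h
  | MEx1 i g => mso_wf (fun l => (l == i) || fo l) so g
  | MEx2 j g => mso_wf fo (fun l => (l == j) || so l) g
  end.

(* phi(x, y; Z_0, ..., Z_{n-1}) : free first-order variables among x = 0, y = 1,
   free set variables among 0, ..., n-1 *)
Definition mso_form2 (n : nat) (phi : mso) : bool :=
  mso_wf (fun i => i <= 1) (fun j => j < n) phi.

Definition linear_order {A : Type} (r : A -> A -> Prop) : Prop :=
  [/\ forall a, r a a,
      forall a b, r a b -> r b a -> a = b,
      forall a b c, r a b -> r b c -> r a c
    & forall a b, r a b \/ r b a].

Definition asg2 {A : Type} (a b : A) : nat -> A :=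
  fun i => if i == 0 then a else b.

Definition defines_order_in (A : finType) (R : rel A) (phi : mso) : Prop :=
  exists P : nat -> {set A},
    linear_order (fun a b => sat R (asg2 a b) P phi).

Definition MSO1_orderable (C : graph -> Prop) : Prop :=
  exists (n : nat) (phi : mso), mso_form2 n phi /\
    forall G, C G -> 0 < #|gV G| -> defines_order_in _ (@gadj G) phi.

Definition MSO2_orderable (C : graph -> Prop) : Prop :=
  exists (n : nat) (phi : mso), mso_form2 n phi /\
    forall G, C G -> 0 < #|{: (gV G + edge_of G)%type}| ->
      defines_order_in _ (incidence G) phi.

Definition del_adj (G : graph) (S : {set gV G}) : rel (gV G) :=
  fun x y => [&& x \notin S, y \notin S & gadj x y].

Definition ncomp_minus (G : graph) (S : {set gV G}) : nat :=
  n_comp (del_adj G S) (~: S).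

Definition Sep (G : graph) (k : nat) : nat :=
  \max_(S : {set gV G} | #|S| <= k) ncomp_minus G S.

Definition SEP (C : graph -> Prop) : Prop :=
  exists f : nat -> nat, forall G, C G -> forall k, Sep G k <= f k.

(* H_0 (x)_R ... (x)_R H_{m-1}, ports in [k] = 'I_k, labels deleted *)
Definition glue (m k : nat) (H : 'I_m -> graph) (p : forall i, gV (H i) -> 'I_k)
    (R : rel 'I_k) : rel {i : 'I_m & gV (H i)} :=
  fun u v =>
    if tag u == tag v then gadj (tagged u) (tagged_as u v)
    else R (p _ (tagged u)) (p _ (tagged v)) || R (p _ (tagged v)) (p _ (tagged u)).

Definition iso_to (G : graph) (T : finType) (e : rel T) : Prop :=
  exists f : gV G -> T, bijective f /\ forall x y, gadj x y = e (f x) (f y).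

Definition cut_decomp (G : graph) (k m : nat) : Prop :=
  exists (H : 'I_m -> graph) (p : forall i, gV (H i) -> 'I_k) (R : rel 'I_k),
    (forall i, 0 < #|gV (H i)|) /\ iso_to G _ (glue m k H p R).

(* Cut(G,k) <= f(k), Cut(G,k) being the maximal m with cut_decomp G k m *)
Definition CUT (C : graph -> Prop) : Prop :=
  exists f : nat -> nat, forall G, C G -> forall k m, cut_decomp G k m -> m <= f k.

(* Main.v *)
From Stdlib Require Import Setoid.
Require Import Defs.
From mathcomp Require Import all_boot.
From mathcomp Require Import zify.
Unset Printing Implicit Defensive.


Fixpoint sidx (f : mso) : nat :=
  match f with
  | MIn _ j => j.+1
  | MNot g => sidx g
  | MOr g h => maxn (sidx g) (sidx h)
  | MEx1 _ g => sidx g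
  | MEx2 j g => maxn j.+1 (sidx g)
  | _ => 0
  end.

Fixpoint trm (rho : nat -> nat -> mso) (f : mso) : mso :=
  match f with
  | MRel i j => rho i j
  | MNot g => MNot (trm rho g)
  | MOr g h => MOr (trm rho g) (trm rho h)
  | MEx1 i g => MEx1 i (trm rho g)
  | MEx2 j g => MEx2 j (trm rho g)
  | g => g
  end.

Definition MAnd a b := MNot (MOr (MNot a) (MNot b)).

Section Tr.
Variable A : finType.

Lemma sat_extV (R : rel A) f : forall v (V V' : nat -> {set A}),
  (forall j, j < sidx f -> V j = V' j) -> (sat R v V f <-> sat R v V' f).
Proof.
elim: f => [i j|i j|i j|g IH|g IHg h IHh|i g IH|j g IH] v V V' E /=.
- by [].
- by [].
- by rewrite E.
- by rewrite (IH v V V').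
- rewrite (IHg v V V') ?(IHh v V V') // => l Hl; apply: E => /=;
  by rewrite leq_max Hl ?orbT.
- split=> -[a Ha]; exists a; [rewrite -(IH _ V V') | rewrite (IH _ V V')] => //.
- split=> -[X HX]; exists X.
  + rewrite -(IH _ (fun l => if l == j then X else V l)) // => l Hl.
    by case: (l == j) => //; apply: E => /=; rewrite leq_max Hl orbT.
  + rewrite (IH _ _ (fun l => if l == j then X else V' l)) // => l Hl.
    by case: (l == j) => //; apply: E => /=; rewrite leq_max Hl orbT.
Qed.

Lemma sat_tr (R R' : rel A) rho z (Z : {set A}) :
  (forall v V i j, V z = Z -> (sat R' v V (rho i j) <-> R (v i) (v j))) ->
  forall f v V, sidx f <= z -> V z = Z -> (sat R' v V (trm rho f) <-> sat R v V f).
Proof.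
move=> Hr; elim=> [i j|i j|i j|g IH|g IHg h IHh|i g IH|j g IH] v V /= Hs HZ.
- exact: Hr.
- by [].
- by [].
- by rewrite IH.
- move: Hs; rewrite geq_max => /andP[h1 h2]; by rewrite IHg ?IHh.
- by split=> -[a Ha]; exists a; move: Ha; rewrite IH.
- move: Hs; rewrite geq_max => /andP[h1 h2].
  have hjz : (z == j) = false by apply/negbTE; rewrite neq_ltn h1 orbT.
  by split=> -[X HX]; exists X; move: HX; rewrite IH //= hjz.
Qed.
End Tr.

Lemma wf_mono f : forall fo so fo' so' : nat -> bool, mso_wf fo so f ->
  (forall i, fo i -> fo' i) -> (forall j, so j -> so' j) -> mso_wf fo' so' f.
Proof.
elim: f => [i j|i j|i j|g IH|g IHg h IHh|i g IH|j g IH] fo so fo' so' /= W Hf Hs.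
- by case/andP: W => /Hf -> /Hf ->.
- by case/andP: W => /Hf -> /Hf ->.
- by case/andP: W => /Hf -> /Hs ->.
- exact: IH W Hf Hs.
- by case/andP: W => /IHg-> // /IHh->.
- apply: IH W _ Hs => l /orP[->//|/Hf ->]; by rewrite orbT.
- apply: IH W Hf _ => l /orP[->//|/Hs ->]; by rewrite orbT.
Qed.

Lemma wf_tr (rho : nat -> nat -> mso) z :
  (forall (fo so : nat -> bool) i j, fo i -> fo j -> so z -> mso_wf fo so (rho i j)) ->
  forall f fo so, mso_wf fo so f -> so z -> mso_wf fo so (trm rho f).
Proof.
move=> Hr; elim=> [i j|i j|i j|g IH|g IHg h IHh|i g IH|j g IH] fo so /= W Hz //.
- by case/andP: W => *; apply: Hr.
- exact: IH.
- by case/andP: W => /IHg-> // /IHh->.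
- exact: IH.
- by apply: IH => //; rewrite Hz orbT.
Qed.

Lemma linear_order_iff {T : Type} (r r' : T -> T -> Prop) :
  (forall a b, r a b <-> r' a b) -> linear_order r -> linear_order r'.
Proof.
move=> E [h1 h2 h3 h4]; split.
- by move=> a; apply (proj1 (E a a)), h1.
- by move=> a b /(E a b) ? /(E b a) ?; apply: h2.
- by move=> a b c /(E a b) ? /(E b c) ?; apply (proj1 (E a c)); exact: (h3 a b c).
- by move=> a b; case: (h4 a b) => [/(E a b)|/(E b a)]; [left|right].
Qed.

Definition rho1 z i j := MAnd (MIn i z) (MAnd (MNot (MIn j z)) (MRel i j)).
Definition rho2 z i j :=
  MOr (MAnd (MIn i z) (MAnd (MIn j z) (MNot (MEq i j)))) (MOr (MRel i j) (MRel j i)).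

Definition Vset (G : graph) : {set (gV G + edge_of G)%type} :=
  [set x | if x is inl _ then true else false].

Lemma rho1_ok (G : graph) z v V i j : V z = Vset G ->
  (sat (IS_adj G) v V (rho1 z i j) <-> incidence G (v i) (v j)).
Proof.
move=> HZ; rewrite /rho1 /MAnd /= HZ !inE.
case: (v i) => [x|e]; case: (v j) => [y|f] /=.
all: try case: (x != y); try case: (x \in sval f); try case: (y \in sval e).
all: rewrite /is_true; split; intuition congruence.
Qed.
Lemma rho2_ok (G : graph) z v V i j : V z = Vset G ->
  (sat (incidence G) v V (rho2 z i j) <-> IS_adj G (v i) (v j)).
Proof.
move=> HZ; rewrite /rho2 /MAnd /= HZ !inE.
case: (v i) => [x|e]; case: (v j) => [y|f] /=.
- have E : (inl x = inl y :> (gV G + edge_of G)%type) <-> x = y by split=> [[]|->].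
  rewrite E; case: (eqVneq x y) => [->|ne]; [|move/eqP: ne => ne]; rewrite /is_true; split; intuition congruence.
all: try case: (x \in sval f); try case: (y \in sval e).
all: rewrite /is_true; split; intuition congruence.
Qed.

Lemma partA (C : graph -> Prop) : MSO2_orderable C <-> MSO1_orderable (IS_class C).
Proof.
split.
- case=> n [phi [Wf H]].
  pose z := maxn n (sidx phi).
  exists z.+1, (trm (rho1 z) phi); split.
  + rewrite /mso_form2; apply: (@wf_tr _ z) => //.
    * move=> fo so i j hi hj hz; by rewrite /= ?hi ?hj ?hz.
    * apply: wf_mono Wf _ _ => // l hl; apply: leq_trans hl _.
      by rewrite ltnW // ltnS leq_max leqnn.
  + move=> G' [G [CG ->]] Hc; case: (H G CG Hc) => P HP.
    exists (fun l => if l == z then Vset G else P l).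
    apply: linear_order_iff HP => a b.
    rewrite (@sat_tr _ _ _ _ _ _ (@rho1_ok G z)) /= ?eqxx ?leq_max ?leqnn ?orbT //.
    apply: sat_extV => l hl /=.
    have -> : (l == z) = false by apply/negbTE; rewrite neq_ltn (leq_trans hl) // leq_max leqnn orbT.
    by [].
- case=> n [phi [Wf H]].
  pose z := maxn n (sidx phi).
  exists z.+1, (trm (rho2 z) phi); split.
  + rewrite /mso_form2; apply: (@wf_tr _ z) => //.
    * move=> fo so i j hi hj hz; by rewrite /= ?hi ?hj ?hz.
    * apply: wf_mono Wf _ _ => // l hl; apply: leq_trans hl _.
      by rewrite ltnW // ltnS leq_max leqnn.
  + move=> G CG Hc; case: (H (IS G) (ex_intro _ G (conj CG erefl)) Hc) => P HP.
    exists (fun l => if l == z then Vset G else P l).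
    apply: linear_order_iff HP => a b.
    rewrite (@sat_tr _ _ _ _ _ _ (@rho2_ok G z)) /= ?eqxx ?leq_max ?leqnn ?orbT //.
    apply: sat_extV => l hl /=.
    have -> : (l == z) = false by apply/negbTE; rewrite neq_ltn (leq_trans hl) // leq_max leqnn orbT.
    by [].
Qed.


Section Sub.
Variables (G : graph) (P : pred (gV G)).
Definition sub_adj : rel {x : gV G | P x} := fun a b => gadj (val a) (val b).
Lemma sub_adj_sym : symmetric sub_adj.
Proof. by move=> a b; rewrite /sub_adj gadj_sym. Qed.
Lemma sub_adj_irr : irreflexive sub_adj.
Proof. by move=> a; rewrite /sub_adj gadj_irr. Qed.
Definition subg : graph := @Graph {x : gV G | P x} sub_adj sub_adj_sym sub_adj_irr.
End Sub.

Lemma cut_char_to (G : graph) k m : cut_decomp G k m ->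
  exists (part : gV G -> 'I_m) (lab : gV G -> 'I_k) (R : rel 'I_k),
    (forall i, exists x, part x = i) /\
    (forall x y, part x != part y -> gadj x y = R (lab x) (lab y) || R (lab y) (lab x)).
Proof.
case=> H [p [R [Hne [f [[g fg gf] Hf]]]]].
exists (fun x => tag (f x)), (fun x => p _ (tagged (f x))), R; split.
- move=> i; case/card_gt0P: (Hne i) => h _.
  by exists (g (Tagged (fun i => gV (H i)) h)); rewrite gf.
- move=> x y ne; rewrite Hf /glue (negbTE ne) //.
Qed.



Lemma cut_char_from (G : graph) k m (part : gV G -> 'I_m) (lab : gV G -> 'I_k) (R : rel 'I_k) :
    (forall i, exists x, part x = i) ->
    (forall x y, part x != part y -> gadj x y = R (lab x) (lab y) || R (lab y) (lab x)) ->
    cut_decomp G k m.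
Proof.
move=> Hs Hc.
pose H i := @subg G [pred x | part x == i].
pose p i (a : gV (H i)) := lab (val a).
exists H, p, R; split.
- move=> i; case: (Hs i) => x Ex; apply/card_gt0P.
  by exists (exist _ x (introT eqP Ex) : gV (H i)).
pose f x : {i : 'I_m & gV (H i)} := Tagged (fun i => gV (H i)) (exist _ x (eqxx (part x)) : gV (H (part x))).
have key : forall u v : {i : 'I_m & gV (H i)}, tag u = tag v ->
   val (tagged_as u v) = val (tagged v).
  move=> [i a] [j b] /= E; subst j; by rewrite tagged_asE.
exists f; split.
- apply: (@Bijective _ _ f (fun u : {i : 'I_m & gV (H i)} => val (tagged u))) => // -[i [y py]] /=.
  have E := eqP py; subst i; rewrite /f; by rewrite (bool_irrelevance py (eqxx _)).
- move=> x y; rewrite /glue; case: eqP => [E|/eqP ne].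
  + by rewrite /= /sub_adj (key (f x) (f y) E).
  + by rewrite Hc.
Qed.


Lemma edgeP (G : graph) (e : edge_of G) : exists x y, gadj x y /\ val e = [set x; y].
Proof.
case/existsP: (valP e) => x /existsP [y /andP [hxy /eqP E]]; by exists x, y.
Qed.
Arguments edgeP {G}.

Lemma del_adj_sym (G : graph) S : symmetric (del_adj G S).
Proof. by move=> x y; rewrite /del_adj gadj_sym; case: (x \in S); case: (y \in S). Qed.

Lemma edge_three (G : graph) (f : edge_of G) u v w : u \in val f -> v \in val f -> w \in val f ->
  u != v -> u != w -> v = w.
Proof.
case: (edgeP f) => a [b [_ ->]]; rewrite !inE.
by move=> /orP[]/eqP-> /orP[]/eqP-> /orP[]/eqP->; rewrite ?eqxx.
Qed.

Arguments edge_three {G f u v w}.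
Lemma edge_adj (G : graph) (f : edge_of G) u v : u \in val f -> v \in val f -> u != v -> gadj u v.
Proof.
case: (edgeP f) => a [b [hab ->]]; rewrite !inE.
by move=> /orP[]/eqP-> /orP[]/eqP->; rewrite ?eqxx // gadj_sym.
Qed.

Arguments edge_adj {G f u v}.
Section Construct.
Variables (G : graph) (S : {set gV G}) (k : nat).
Hypothesis hSk : #|S| <= k.
Let e := del_adj G S.
Let Rt := [set r | roots e r & r \notin S].
Variables (x0 : gV G) (h0 : x0 \in Rt).

Let compv (x : gV G) : 'I_#|Rt| := enum_rank_in h0 (root e x).
Let i0 := compv x0.
Let X := (gV G + edge_of G)%type.

Let pickout (f : edge_of G) := [pick u in val f | u \notin S].
Let pickin (f : edge_of G) := [pick u in val f | u \in S].

Let part (x : X) : 'I_#|Rt| :=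
  match x with
  | inl v => if v \in S then i0 else compv v
  | inr f => if pickout f is Some u then compv u else i0
  end.

Let idx (s : gV G) := index s (enum S).

Let labn (x : X) : nat :=
  match x with
  | inl v => if v \in S then 2 + idx v else 0
  | inr f => if pickout f is Some _ then
               (if pickin f is Some s then 2 + k + idx s else 1) else 1
  end.

Let Rn (a b : nat) : bool :=
  [|| (a == 0) && (b == 0), (a == 0) && (2 <= b < 2 + k),
      (2 <= a < 2 + k) && (2 <= b < 2 + k) | (2 <= a < 2 + k) && (b == a + k)].

Let lab (x : X) : 'I_(2 * k + 1).+1 := inord (labn x).
Let R : rel 'I_(2 * k + 1).+1 := fun a b => Rn a b.

Lemma idx_lt s : s \in S -> idx s < k.
Proof. by move=> hs; apply: leq_trans hSk; rewrite cardE /idx index_mem mem_enum. Qed.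

Arguments idx_lt {s}.
Lemma idx_inj s t : s \in S -> t \in S -> idx s = idx t -> s = t.
Proof.
move=> hs ht E; rewrite -(nth_index s (_ : s \in enum S)) ?mem_enum //.
by rewrite -/(idx s) E /idx nth_index // mem_enum.
Qed.

Arguments idx_inj {s t}.
Lemma labn_lt x : labn x < (2 * k + 1).+1.
Proof.
case: x => [v|f] /=.
- case hv: (v \in S) => //; have := idx_lt hv; lia.
- case: (pickout f) => [_|]; last lia; rewrite /pickin; case: pickP => [s /andP[_ hs]|_]; [have := idx_lt hs; lia | lia].
Qed.

Lemma labE x : val (lab x) = labn x.
Proof. exact: (inordK (labn_lt x)). Qed.

Lemma compv_conn u v : connect e u v -> compv u = compv v.
Proof.
move=> c; rewrite /compv; congr enum_rank_in.
by apply/(rootP (sym_connect_sym (@del_adj_sym G S))).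
Qed.

Arguments compv_conn {u v}.
Lemma part_edge (f : edge_of G) v : v \in val f -> v \notin S -> part (inr f) = compv v.
Proof.
move=> vf vS; rewrite /= /pickout; case: pickP => [u /andP[uf uS]|none]; last first.
  by have := none v; rewrite /= vf vS.
apply: compv_conn; case: (eqVneq u v) => [->//|ne].
by apply: connect1; rewrite /e /del_adj uS vS (edge_adj uf vf ne).
Qed.

Arguments part_edge {f v}.
Lemma cross x y : part x != part y ->
  IS_adj G x y = R (lab x) (lab y) || R (lab y) (lab x).
Proof.
have hV : forall v, (labn (inl v) == 0) || (2 <= labn (inl v) < 2 + k).
  move=> v /=; case hv: (v \in S) => //; have := idx_lt hv; lia.
have hE : forall f : edge_of G, (labn (inr f) == 1) || (2 + k <= labn (inr f)).
  move=> f /=; case: (pickout f) => // _; case: (pickin f) => // s; lia.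
have VE : forall v (f : edge_of G), part (inl v) != part (inr f) ->
    IS_adj G (inl v) (inr f) = R (lab (inl v)) (lab (inr f)) || R (lab (inr f)) (lab (inl v)).
  move=> v f ne; rewrite /R !labE /=.
  case: (boolP (v \in S)) => vS.
  - move: ne; rewrite /= vS /pickout; case: pickP => [u /andP[uf uS]|none] ne; last by rewrite eqxx in ne.
    rewrite /pickin; case: pickP => [s /andP[sf sS]|none2].
    + have -> : (v \in val f) = (idx s == idx v).
        apply/idP/eqP => [vf|E]; first by rewrite (edge_three uf sf vf) //;
          apply/eqP => E; subst; [rewrite sS in uS|rewrite vS in uS].
        by rewrite -(idx_inj sS vS E).
      rewrite /Rn; have := idx_lt sS; have := idx_lt vS.
      case: (eqVneq (idx s) (idx v)) => [->|]; lia.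
    + have -> : (v \in val f) = false by have := none2 v; rewrite /= vS andbT.
      rewrite /Rn; have := idx_lt vS; lia.
  - have -> : (v \in val f) = false.
      apply/negP => vf; move: ne; by rewrite (part_edge vf vS) /= (negbTE vS) eqxx.
    by case: (pickout f) => [?|]; [case: (pickin f) => [?|]|]; rewrite /Rn; lia.
case: x => [v|f]; case: y => [w|g] ne.
- have vw : v != w by apply: contraNneq ne => ->.
  rewrite /= vw /R !labE /Rn; have := hV v; have := hV w; lia.
- exact: VE.
- by rewrite IS_adj_sym orbC; apply: VE; rewrite eq_sym.
- by rewrite /= /R !labE /Rn; have := hE f; have := hE g; lia.
Qed.

Lemma surj i : exists x, part x = i.
Proof.
have hr := enum_valP i; move: (hr); rewrite inE => /andP[rr rS].
exists (inl (enum_val i)); rewrite /= (negbTE rS) /compv.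
by move/eqP: rr => ->; rewrite enum_valK_in.
Qed.

End Construct.


Section Edges.
Variable G : graph.


Lemma card_edge (e : edge_of G) : #|val e| <= 2.
Proof. by case: (edgeP e) => x [y [_ ->]]; rewrite cards2; case: (x != y). Qed.

Definition mk_edge (x y : gV G) (h : gadj x y) : edge_of G.
Proof.
exists [set x; y]; apply/existsP; exists x; apply/existsP; exists y.
by rewrite h eqxx.
Defined.

Lemma mk_edge_val (x y : gV G) h : val (@mk_edge x y h) = [set x; y].
Proof. by []. Qed.


End Edges.

Lemma sep_core (G : graph) m k (part : (gV G + edge_of G)%type -> 'I_m)
  (lab : (gV G + edge_of G)%type -> 'I_k) (R : rel 'I_k) :
  (forall i, exists x, part x = i) ->
  (forall x y, part x != part y -> IS_adj G x y = R (lab x) (lab y) || R (lab y) (lab x)) ->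
  exists S : {set gV G}, #|S| <= 4 * k /\ m <= #|S| + 2 ^ #|S| + ncomp_minus G S.
Proof.
move=> Hs Hc.
pose S := [set u | [exists e : edge_of G, (u \in val e) && (part (inr e) != part (inl u))]].
have K : forall (e : edge_of G) (u w : gV G), u \in val e -> part (inr e) != part (inl u) ->
    lab (inl w) = lab (inl u) -> part (inl w) != part (inr e) -> w \in val e.
  move=> e u w ue pe lw pw.
  have := Hc (inr e) (inl u) pe; rewrite /= ue => h1.
  by have := Hc (inl w) (inr e) pw; rewrite /= lw orbC -h1 => ->.
have inS : forall (e : edge_of G) (u : gV G), u \in val e -> part (inr e) != part (inl u) -> u \in S.
  move=> e u h1 h2; rewrite inE; apply/existsP; exists e; by rewrite h1 h2.
have Sbnd : forall a, #|[set u in S | lab (inl u) == a]| <= 4.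
  move=> a; set Ea := [set u in S | lab (inl u) == a].
  case: (boolP (Ea == set0)) => [/eqP E0|/set0Pn [u1 hu1]]; first by rewrite E0 cards0.
  have [e [f sub]] : exists e f : edge_of G, Ea \subset val e :|: val f.
    move: (hu1); rewrite !inE => /andP[/existsP[e1 /andP[ue1 pe1]] /eqP la1].
    case: (pickP [pred w | (w \in Ea) && (part (inl w) == part (inr e1))]) => [w0 /andP[hw0 /eqP pw0]|none].
    - move: (hw0); rewrite !inE => /andP[/existsP[f1 /andP[wf1 pf1]] /eqP la0].
      exists e1, f1; apply/subsetP => w hw; rewrite inE.
      move: (hw); rewrite !inE => /andP[_ /eqP law].
      case: (eqVneq (part (inl w)) (part (inr e1))) => [pw|pw].
      + apply/orP; right; apply: (K f1 w0 w wf1 pf1); first by rewrite law la0.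
        by rewrite pw -pw0 eq_sym.
      + apply/orP; left; apply: (K e1 u1 w ue1 pe1) => //; by rewrite law la1.
    - exists e1, e1; apply/subsetP => w hw; rewrite setUid.
      apply: (K e1 u1 w ue1 pe1); first by move: hw; rewrite !inE => /andP[_ /eqP ->]; rewrite la1.
      by have := none w; rewrite /= hw /= => /negbT.
  apply: leq_trans (subset_leq_card sub) _.
  apply: leq_trans (leq_card_setU _ _) _.
  by rewrite -[4]/(2 + 2) leq_add // card_edge.
have Scard : #|S| <= 4 * k.
  have -> : #|S| = \sum_(a < k) #|[set u in S | lab (inl u) == a]|.
    rewrite -sum1_card (partition_big (fun u => lab (inl u)) predT) //=.
    apply: eq_bigr => a _; rewrite -sum1_card; apply: eq_bigl => u; by rewrite !inE.
  apply: (@leq_trans (\sum_(a < k) 4)); first by apply: leq_sum => a _; apply: Sbnd.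
  by rewrite sum_nat_const card_ord mulnC.
have edge_part : forall (u v : gV G) (h : gadj u v), u \notin S -> v \notin S ->
    part (inl u) = part (inl v).
  move=> u v h nu nv; pose e := @mk_edge G u v h.
  have eu : u \in val e by rewrite mk_edge_val !inE eqxx.
  have ev : v \in val e by rewrite mk_edge_val !inE eqxx orbT.
  have h1 : part (inr e) = part (inl u) by apply/eqP; apply: contraNT nu => /(inS _ _ eu).
  have h2 : part (inr e) = part (inl v) by apply/eqP; apply: contraNT nv => /(inS _ _ ev).
  by rewrite -h1 -h2.
have symc : connect_sym (del_adj G S) := sym_connect_sym (@del_adj_sym G S).
have conn_part : forall x y, connect (del_adj G S) x y -> part (inl x) = part (inl y).
  move=> x y cxy; apply/eqP.
  have := @closed_connect _ _ [pred z | part (inl z) == part (inl x)] _ _ _ cxy.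
  rewrite !inE eqxx eq_sym => <- //.
  move=> z w /and3P[nz nw hzw]; by rewrite !inE (edge_part z w hzw nz nw).
have conn_S : forall x y, connect (del_adj G S) x y -> (x \in S) = (y \in S).
  move=> x y cxy.
  have cl : closed (del_adj G S) (~: S).
    by move=> z w /and3P[nz nw hzw]; rewrite !in_setC nz nw.
  have := closed_connect cl cxy; rewrite !in_setC => h; exact: negb_inj h.
pose A := [set part (inl u) | u in S].
pose Rt := [set r | roots (del_adj G S) r & r \notin S].
pose B := [set part (inl r) | r in Rt].
pose Es := [set e : edge_of G | val e \subset S].
pose D := [set part (inr e) | e in Es].
have cover : forall i, i \in A :|: B :|: D.
  move=> i; case: (pickP [pred u | part (inl u) == i]) => [u /eqP pu|none].
  - case: (boolP (u \in S)) => hu.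
    + by rewrite !inE; apply/orP; left; apply/orP; left; apply/imsetP; exists u.
    + set r := root (del_adj G S) u.
      have cur : connect (del_adj G S) u r := connect_root _ u.
      rewrite !inE; apply/orP; left; apply/orP; right; apply/imsetP; exists r.
      * by rewrite inE (roots_root symc) /= -(conn_S _ _ cur).
      * by rewrite -(conn_part _ _ cur) pu.
  - case: (Hs i) => -[u|e] pe.
    + by have := none u; rewrite /= pe eqxx.
    + rewrite !inE; apply/orP; right; apply/imsetP; exists e => //.
      rewrite inE; apply/subsetP => w hw; apply: (inS e w hw).
      by rewrite pe eq_sym; have := none w; rewrite /= => ->.
have hm : m <= #|A| + #|B| + #|D|.
  rewrite -{1}(card_ord m) -cardsT.
  apply: leq_trans (subset_leq_card (_ : [set: 'I_m] \subset A :|: B :|: D)) _.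
    by apply/subsetP => i _; apply: cover.
  apply: leq_trans (leq_card_setU _ _) _; rewrite leq_add2r; exact: leq_card_setU.
have hA : #|A| <= #|S| := leq_imset_card _ _.
have hB : #|B| <= ncomp_minus G S.
  apply: leq_trans (leq_imset_card _ _) _; apply: eq_leq; apply: eq_card => r.
  by rewrite !inE.
have hD : #|D| <= 2 ^ #|S|.
  apply: leq_trans (leq_imset_card _ _) _; rewrite -card_powerset.
  have -> : #|Es| = #|[set val e | e in Es]| by rewrite card_imset //; exact: val_inj.
  apply: subset_leq_card; apply/subsetP => X /imsetP[e he ->].
  by rewrite powersetE; move: he; rewrite inE.
exists S; split => //.
apply: leq_trans hm _; rewrite addnAC; apply: leq_add => //; exact: leq_add.
Qed.

Lemma cut_construct (G : graph) (S : {set gV G}) k : #|S| <= k -> 0 < ncomp_minus G S ->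
  cut_decomp (IS G) (2 * k + 1).+1 (ncomp_minus G S).
Proof.
move=> hS pos.
have E : ncomp_minus G S = #|[set r | roots (del_adj G S) r & r \notin S]|.
  by apply: eq_card => r; rewrite !inE.
rewrite E in pos *; case/card_gt0P: pos => x0 h0.
eapply cut_char_from; [exact: (@surj _ _ _ h0) | exact: (@cross _ _ _ hS _ h0)].
Qed.

Theorem proposition6p3 (C : graph -> Prop) :
  (MSO2_orderable C <-> MSO1_orderable (IS_class C)) /\
  (SEP C <-> CUT (IS_class C)).
Proof.
split; first exact: partA.
split.
- case=> f Hf; exists (fun k => 4 * k + 2 ^ (4 * k) + f (4 * k)).
  move=> G' [G [CG ->]] k m hc.
  case: (@cut_char_to _ _ _ hc) => part [lab [R [Hs Hc]]].
  case: (@sep_core G _ _ part lab R Hs Hc) => S [hS hm].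
  apply: leq_trans hm _; apply: leq_add; first apply: leq_add.
  + exact: hS.
  + exact: leq_pexp2l.
  + apply: leq_trans (Hf G CG (4 * k)); rewrite /Sep.
    exact: (@leq_bigmax_cond _ (fun S : {set gV G} => #|S| <= 4 * k) (ncomp_minus G) S hS).
- case=> f Hf; exists (fun k => f (2 * k + 1).+1) => G CG k.
  rewrite /Sep; apply/bigmax_leqP => S hS.
  case: (posnP (ncomp_minus G S)) => [->//|pos].
  exact: (Hf (IS G) (ex_intro _ G (conj CG erefl)) _ _ (@cut_construct _ _ _ hS pos)).
Qed.
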